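(* Let $K=\mathbb{C}(t)=\mathbb{C}(\mathbb{P}^1)$. For every finite set $S$ of points of $\mathbb{P}^1(\mathbb{C})$, strong approximation outside $S$ fails for the $K$-variety $\mathbb{G}_{m,K}$.
   Context: Places of $K$ are identified with the points $P\in\mathbb{P}^1(\mathbb{C})$; $K_P$ is the completion at $P$, with its valuation topology. $\mathbb{A}_K$ is the ring of adèles of $K$ and $\mathbb{A}_K^S$ the adèles outside $S$. A $K$-variety $X$ satisfies strong approximation outside $S$ if the diagonal image of $X(K)$ is dense in the projection of $X(\mathbb{A}_K)$ to $X(\mathbb{A}_K^S)$; for $X=\mathbb{G}_{m,K}$, $X(K)=K^*$ and $X(\mathbb{A}_K^S)$ is the group of idèles outside $S$. *)

(* Defs.v *)
(* K = C(t) with C = R[i] (R : realType, so C is the field of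
   complex numbers), places = points of P^1(C) = option C (None = infinity),
   completions K_P = formal Laurent series C((t-a)) (resp. C((1/t))). *)
From HB Require Import structures.
From mathcomp Require Import all_boot all_order all_algebra.
From mathcomp Require Import all_reals complex.
Set Implicit Arguments. Unset Strict Implicit. Unset Printing Implicit Defensive.
Import Order.TTheory GRing.Theory Num.Theory.
Local Open Scope ring_scope.

Section Defs.
Variable R : realType.
Local Notation C := (R[i]).
Local Notation "x %:F" := (@FracField.tofrac _ x).

Definition Kfield := {fraction {poly C}}.

Definition place := option C.

(* Laurent series: coefficient functions Z -> C with support bounded below;
   L n is the coefficient of pi^n, pi the uniformizer (t - a), resp. 1/t *)
Definition laurent := int -> C.
Definition lbounded (L : laurent) := exists N : int, forall n, n < N -> L n = 0.
Definition lnonzero (L : laurent) := exists n, L n != 0.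
Definition ord_ge (L : laurent) (m : int) := forall n, n < m -> L n = 0.
Definition lunit (L : laurent) := ord_ge L 0 /\ L 0 != 0.
Definition lsub (L M : laurent) : laurent := fun n => L n - M n.

(* L is the image of f in the completion K_P *)
Definition expands (P : place) (f : Kfield) (L : laurent) :=
  lbounded L /\
  exists p q : {poly C}, q != 0 /\ f = p%:F / q%:F /\
  match P with
  | Some a =>
      let Pa := p \Po ('X + a%:P) in let Qa := q \Po ('X + a%:P) in
      forall n : int, \sum_(i < size Qa) Qa`_i * L (n - i%:Z)
                      = (if (0 <= n) then Pa`_(absz n) else 0)
  | None =>
      forall n : int, \sum_(i < size q) q`_i * L (n + i%:Z)
                      = (if (n <= 0) then p`_(absz n) else 0)
  end.

(* idèles outside S (coordinates at places of S are irrelevant) *)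
Definition is_idele (S : seq place) (x : place -> laurent) :=
  (forall P, P \notin S -> lbounded (x P) /\ lnonzero (x P)) /\
  exists T : seq place, forall P, P \notin S -> P \notin T -> lunit (x P).

(* basic open set of the restricted product topology on idèles outside S:
   prod_{P in T} {y_P : v(y_P - x_P) >= m}  x  prod_{P notin S, T} O_P^*   *)
Definition basic_nbhd (S T : seq place) (x : place -> laurent) (m : int)
    (y : place -> laurent) :=
  is_idele S y /\
  forall P, P \notin S ->
    (P \in T -> ord_ge (lsub (y P) (x P)) m) /\ (P \notin T -> lunit (y P)).

Definition idele_open (S : seq place) (U : (place -> laurent) -> Prop) :=
  forall x, U x -> is_idele S x /\
    exists (T : seq place) (m : int),
      (forall P, P \notin S -> P \notin T -> lunit (x P)) /\
      (forall y, basic_nbhd S T x m y -> U y).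

(* strong approximation outside S for G_m: K^* is dense in the projection
   of G_m(A_K) (= all idèles) to G_m(A_K^S) (= idèles outside S). *)
Definition strong_approx_Gm (S : seq place) :=
  forall U, idele_open S U ->
    (exists x, is_idele [::] x /\ U x) ->
    exists f : Kfield, f != 0 /\
      exists y, U y /\ forall P, P \notin S -> expands P f (y P).

End Defs.

(* Main.v *)
Require Import Defs.
From HB Require Import structures.
From mathcomp Require Import all_boot all_order all_algebra.
From mathcomp Require Import all_reals complex.
From mathcomp Require Import zify ring.
Set Implicit Arguments. Unset Strict Implicit. Unset Printing Implicit Defensive.
Import Order.TTheory GRing.Theory Num.Theory.
Local Open Scope ring_scope.
Set Bullet Behavior "Strict Subproofs".

Section Gen.
Variable F : fieldType.
Implicit Types p q : {poly F}.

Lemma dvdXnP n p : reflect (forall i, (i < n)%N -> p`_i = 0) ('X^n %| p).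
Proof.
apply: (iffP idP).
  move=> /dvdpP [qq ->] i lin; rewrite coefMXn lin //.
move=> H; rewrite -(poly_take_drop n p).
have -> : take_poly n p = 0.
  apply/polyP=> i; rewrite coef_take_poly coef0; case: ifP => // /H //.
by rewrite add0r dvdp_mulIr.
Qed.

Lemma conv_coef (q : {poly F}) (L : int -> F) (n M : nat) :
  (forall k : int, k < 0 -> L k = 0) -> (n < M)%N ->
  \sum_(i < size q) q`_i * L (n%:Z - i%:Z) = (q * \poly_(i < M) L i%:Z)`_n.
Proof.
move=> Lneg nM.
rewrite coefM.
rewrite (big_ord_widen (n.+1 + size q) (fun i => q`_i * L (n%:Z - i%:Z))); last by rewrite leq_addl.
rewrite (big_ord_widen (n.+1 + size q) (fun i => q`_i * (\poly_(i0 < M) L i0%:Z)`_(n - i))); last by rewrite leq_addr.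
rewrite big_mkcond [RHS]big_mkcond /=; apply: eq_bigr => i _.
case: (ltnP i (size q)) => iq; case: (ltnP i n.+1) => iN //=.
+ by rewrite coef_poly (leq_ltn_trans (leq_subr _ _) nM) subzn.
+ by rewrite Lneg ?mulr0 // subr_lt0 ltz_nat.
+ by rewrite nth_default ?mul0r.
Qed.

Lemma key (p0 q0 p1 q1 : {poly F}) (L : int -> F) (m : nat) :
  q1 != 0 -> p0 * q1 = p1 * q0 -> (forall n : int, n < 0 -> L n = 0) ->
  (forall n : int, \sum_(i < size q1) q1`_i * L (n - i%:Z)
                   = (if (0 <= n) then p1`_(absz n) else 0)) ->
  'X^m %| q0 * \poly_(i < m + size q1) L i%:Z - p0.
Proof.
move=> q1n0 e Lneg conv.
set M := (m + size q1)%N; set LM := \poly_(i < M) L i%:Z.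
have h1 : 'X^M %| q1 * LM - p1.
  apply/dvdXnP => i iM; rewrite coefB -conv_coef //.
  rewrite (conv i) /=. by rewrite subrr.
have h2 : q1 * (q0 * LM - p0) = q0 * (q1 * LM - p1).
  by rewrite !mulrBr !mulrA (mulrC q1 q0) (mulrC q1 p0) e (mulrC p1).
have [k [r rn0 def]] := multiplicity_XsubC q1 0.
move: rn0; rewrite q1n0 /= => rn0.
rewrite subr0 in def.
have rne0 : r != 0 by apply: contraNneq rn0 => ->; rewrite root0.
have ksz : (k < size q1)%N.
  rewrite def size_mul ?expf_neq0 ?polyX_eq0 // size_polyXn addnS /=.
  by rewrite -{1}(add0n k) ltn_add2r size_poly_gt0.
have : 'X^M %| r * (q0 * LM - p0) * 'X^k.
  have -> : r * (q0 * LM - p0) * 'X^k = q0 * (q1 * LM - p1) by rewrite -h2 def mulrAC.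
  exact: dvdp_mull.
rewrite -(subnKC (ltnW (leq_trans ksz (leq_addl m _)) : (k <= M)%N)) exprD [X in _ %| X]mulrC.
rewrite dvdp_mul2l ?expf_neq0 ?polyX_eq0 // Gauss_dvdpr; last first.
  by apply: coprimep_expl; rewrite coprimep_sym coprimepX.
apply: dvdp_trans; apply: dvdp_exp2l.
by rewrite /M -addnBA ?leq_addr // ltnW.
Qed.
End Gen.
Section Cl.
Variable F : closedFieldType.

Lemma prod_dvd (D : {poly F}) (rs : seq F) :
  (forall z, z \in rs -> ('X - z%:P) %| D) ->
  \prod_(z <- rs) ('X - z%:P) %| D * (\prod_(z <- rs) ('X - z%:P))^`().
Proof.
elim: rs => [|z rs IH] H; first by rewrite big_nil dvd1p.
rewrite big_cons derivM derivXsubC mul1r mulrDr.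
have [D1 eqD] : exists D1, D = D1 * ('X - z%:P).
  by apply/dvdpP; apply: H; rewrite mem_head.
apply: dvdp_add.
  by apply/dvdpP; exists D1; rewrite eqD mulrA.
rewrite mulrCA dvdp_mul2l ?polyXsubC_eq0 //.
by apply: IH => y yin; apply: H; rewrite in_cons yin orbT.
Qed.

Lemma divD (D p : {poly F}) : p != 0 ->
  (forall z, root p z -> ('X - z%:P) %| D) -> p %| D * p^`().
Proof.
move=> pn0 H; have [rs def] := closed_field_poly_normal p.
have lc : lead_coef p != 0 by rewrite lead_coef_eq0.
rewrite def derivZ -scalerAr.
rewrite (eqp_dvdl _ (eqp_scale _ lc)) (eqp_dvdr _ (eqp_scale _ lc)).
apply: prod_dvd => z zin; apply: H.
by rewrite def rootZ // root_prod_XsubC.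
Qed.
End Cl.

Section Fin.
Variable F : numFieldType.

Lemma dvdX_mulrn (A : {poly F}) n k : 'X^n %| (A * 'X^n) *+ k.
Proof. by rewrite -mulr_natl mulrA dvdp_mulIr. Qed.

Lemma final (Dt P Q r : {poly F}) (N : nat) :
  Dt != 0 -> Dt * (P^`() * Q - P * Q^`()) = P * Q * r -> (size r < N)%N ->
  Q`_0 != 0 -> 'X^(N.+1) %| Q * (1 + 'X^N) - P -> (0 < N)%N -> False.
Proof.
move=> Dn0 eqW szr Q0 hdiv N0.
have [E eE] := dvdpP _ _ hdiv.
set Fp := E * 'X^(N.+1).
have eP : P = Q * (1 + 'X^N) - Fp by rewrite /Fp -eE; ring.
pose TT : {poly F} := 'X^(N.-1) *+ N.
have dT : (1 + 'X^N)^`() = TT by rewrite derivD derivC derivXn add0r.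
have dF : 'X^N %| Fp^`().
  rewrite /Fp derivM derivXn /=; apply: dvdp_add.
    by rewrite exprS mulrA dvdp_mulIr.
  by rewrite mulrnAr dvdX_mulrn.
have dFp : 'X^N %| Fp by rewrite /Fp exprS mulrA dvdp_mulIr.
set W := P^`() * Q - P * Q^`().
have hW : W - Q ^+ 2 * TT = Fp * Q^`() - Fp^`() * Q.
  rewrite /W eP derivB derivM dT; ring.
have XW : 'X^N %| W - Q ^+ 2 * TT.
  by rewrite hW; apply: dvdp_sub; apply: dvdp_mulr.
have eTT : Q ^+ 2 * TT = (Q ^+ 2 * 'X^(N.-1)) *+ N by rewrite /TT mulrnAr.
have XW1 : 'X^(N.-1) %| W.
  rewrite -(subrK (Q ^+ 2 * TT) W); apply: dvdp_add.
    exact: dvdp_trans (dvdp_exp2l 'X (leq_pred N)) XW.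
  by rewrite eTT dvdX_mulrn.
have P0 : P`_0 = Q`_0.
  have NN : (0 == N) = false by rewrite eq_sym; case: (N) N0.
  have := dvdXnP _ _ hdiv 0 (ltn0Sn _).
  rewrite coefB coef0M coefD coef1 coefXn NN addr0 mulr1.
  by move/eqP; rewrite subr_eq0 => /eqP.
have cop : coprimep ('X^(N.-1)) (P * Q).
  apply: coprimep_expl; rewrite coprimep_sym coprimepX.
  by rewrite /root hornerM !horner_coef0 P0 mulf_neq0.
have : 'X^(N.-1) %| r by rewrite -(Gauss_dvdpr _ cop) -eqW dvdp_mull.
have [r0|rn0] := eqVneq r 0; last first.
  move/(dvdp_leq rn0); rewrite size_polyXn prednK //; by rewrite leqNgt szr.
move=> _; move: eqW; rewrite r0 mulr0 => /eqP; rewrite mulf_eq0 (negbTE Dn0) /= => /eqP W0.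
move: XW; rewrite /W W0 sub0r => /dvdXnP/(_ N.-1).
rewrite ltn_predL N0 => /(_ isT) /eqP.
rewrite coefN eTT coefMn coefMXn ltnn subnn coef0M oppr_eq0 mulrn_eq0 /=.
by case: (N) N0 => // n _; rewrite mulf_eq0 (negbTE Q0).
Qed.
End Fin.

Lemma size_quot (K : fieldType) (D p u : {poly K}) : p != 0 ->
  D * p^`() = u * p -> (size u <= (size D).-1)%N.
Proof.
move=> pn0 e.
have [->|un0] := eqVneq u 0; first by rewrite size_poly0.
have dn0 : p^`() != 0.
  by apply: contra_neq un0 => d0; move: e; rewrite d0 mulr0 => /esym/eqP; rewrite mulf_eq0 (negbTE pn0) orbF => /eqP.
have Dn0 : D != 0.
  by apply: contra_neq un0 => D0; move: e; rewrite D0 mul0r => /esym/eqP; rewrite mulf_eq0 (negbTE pn0) orbF => /eqP.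
have h := size_polyMleq D p^`(); rewrite e size_mul // in h.
have h2 := lt_size_deriv pn0.
have := size_poly_gt0 u; have := size_poly_gt0 p; have := size_poly_gt0 D.
rewrite un0 pn0 Dn0 => g1 g2 g3.
move: h; rewrite -!subn1 => h. move: g1 g2 g3 h h2. set su := size u; set sp := size p; set sD := size D; set sd := size p^`(). move=> *; lia.
Qed.

Section M.
Variable R : realType.
Local Notation C := (R[i]).

Lemma sum_mem_le (T : eqType) (f : T -> C) (s : seq T) x :
  (forall y, 0 <= f y) -> x \in s -> f x <= \sum_(y <- s) f y.
Proof.
move=> f0; elim: s => [|y s IH] //; rewrite in_cons big_cons => /orP [/eqP->|xs].
  by rewrite lerDl sumr_ge0.
by rewrite (le_trans (IH xs)) // lerDr.
Qed.

Lemma exists_out (S : seq (place R)) : exists a : C, Some a \notin S.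
Proof.
pose f := fun s : place R => if s is Some z then `|z| else 0.
have f0 : forall y, 0 <= f y by move=> [z|] /=; [exact: normr_ge0 | exact: lexx].
exists (1 + \sum_(y <- S) f y); apply/negP => aS.
have := sum_mem_le f0 aS; rewrite /= ger0_norm ?addr_ge0 ?sumr_ge0 //.
by rewrite -[X in _ <= X]add0r lerD2r ler10.
Qed.

Definition Dp (S : seq (place R)) : {poly C} :=
  \prod_(s <- S) (if s is Some z then 'X - z%:P else 1).

Lemma Dp_dvd S z : Some z \in S -> ('X - z%:P) %| Dp S.
Proof.
elim: S => [|s S IH] //; rewrite in_cons /Dp big_cons => /orP [/eqP<-|zS].
  exact: dvdp_mulIl.
by apply: dvdp_mull; apply: IH.
Qed.

Lemma Dp_neq0 S : Dp S != 0.
Proof.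
elim: S => [|s S IH]; first by rewrite /Dp big_nil oner_neq0.
by rewrite /Dp big_cons mulf_neq0 //; case: s => [z|]; rewrite ?polyXsubC_eq0 ?oner_neq0.
Qed.

Lemma size_Dp S : (size (Dp S) <= (size S).+1)%N.
Proof.
elim: S => [|s S IH]; first by rewrite /Dp big_nil size_poly1.
rewrite /Dp big_cons; apply: (leq_trans (size_polyMleq _ _)).
  have : (size ((if s is Some z then 'X - z%:P else 1)%R : {poly C}) <= 2)%N.
  by case: s => [z|]; rewrite ?size_XsubC ?size_poly1.
move: IH; rewrite /Dp => IH h /=; move: (leq_add h IH); case: (size _ + size _)%N => [|k] //= H; rewrite -ltnS (leq_trans H) //.
Qed.

Definition x0 (a : C) (N : nat) : place R -> laurent R := fun P n =>
  if P == Some a then (if (n == 0) || (n == N%:Z) then 1 else 0)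
  else (if n == 0 then 1 else 0).

Lemma x0_lunit a N P : P != Some a -> lunit (x0 a N P).
Proof.
move=> /negbTE Pa; rewrite /lunit /ord_ge /x0 Pa eqxx oner_neq0; split => // n.
by rewrite lt_neqAle => /andP [/negbTE -> _].
Qed.

Lemma x0_neg a N P (n : int) : n < 0 -> x0 a N P n = 0.
Proof.
move=> n0; have h1 : n != 0 by rewrite ltr0_neq0.
have h2 : n != N%:Z by apply: contraTneq n0 => ->; rewrite -leNgt.
by rewrite /x0 (negbTE h1) (negbTE h2); case: ifP.
Qed.

Lemma x0_idele S a N : is_idele S (x0 a N).
Proof.
split.
  move=> P _; split; first by exists 0 => n; apply: x0_neg.
  by exists 0; rewrite /x0; case: ifP => _; rewrite oner_neq0.
exists [:: Some a] => P _; rewrite inE => Pa; exact: x0_lunit.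
Qed.

Lemma U_open S a N (m : int) : idele_open S (basic_nbhd S [:: Some a] (x0 a N) m).
Proof.
move=> y [yi Hy]; split => //; exists [:: Some a], m; split.
  by move=> P PS PT; have [_ ] := Hy P PS; apply.
move=> z [zi Hz]; split => // P PS; have [h1 h2] := Hz P PS; split => // PT.
have [h3 _] := Hy P PS; move=> n nm.
have := h1 PT n nm; have := h3 PT n nm; rewrite /lsub => e1 e2.
by rewrite -(subrK (y P n) (z P n)) e2 add0r.
Qed.

Lemma U_x0 S a N (m : int) : basic_nbhd S [:: Some a] (x0 a N) m (x0 a N).
Proof.
split; first exact: x0_idele.
move=> P _; split; first by move=> _ n _; rewrite /lsub subrr.
by rewrite inE => Pa; apply: x0_lunit.
Qed.

Lemma core S a (f : Kfield R) (y : place R -> laurent R) :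
  Some a \notin S -> f != 0 ->
  basic_nbhd S [:: Some a] (x0 a (size S).+2) ((size S).+3)%:Z y ->
  (forall P, P \notin S -> expands P f (y P)) -> False.
Proof.
set N := (size S).+2.
move=> aS fn0 [_ Hy] Hexp.
have [_ [pa [qa [qan0 [fE _]]]]] := Hexp _ aS.
have pan0 : pa != 0.
  by apply: contraNneq fn0 => pa0; rewrite fE pa0 tofrac0 mul0r.
set g := gcdp pa qa.
have gn0 : g != 0 by rewrite gcdp_eq0 negb_and pan0.
set p0 := pa %/ g; set q0 := qa %/ g.
have cop : coprimep p0 q0 by apply: coprimep_div_gcd; rewrite pan0.
have epa : pa = p0 * g by rewrite divpK // dvdp_gcdl.
have eqa : qa = q0 * g by rewrite divpK // dvdp_gcdr.
have p0n0 : p0 != 0 by apply: contra_neq pan0 => e; rewrite epa e mul0r.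
have q0n0 : q0 != 0 by apply: contra_neq qan0 => e; rewrite eqa e mul0r.
have rel : forall p1 q1 : {poly C}, q1 != 0 -> f = tofrac p1 / tofrac q1 -> p0 * q1 = p1 * q0.
  move=> p1 q1 q1n0 e.
  have : tofrac p1 / tofrac q1 == tofrac pa / tofrac qa by rewrite -e -fE.
  rewrite eqr_div ?tofrac_eq0 // -!tofracM tofrac_eq => /eqP h.
  apply: (mulIf gn0); rewrite mulrAC -epa -mulrA -eqa h; ring.
have ord0 : forall z, Some z \notin S -> ord_ge (y (Some z)) 0 /\ y (Some z) 0 != 0.
  move=> z zS; have [h1 h2] := Hy _ zS.
  have [eza|za] := eqVneq z a; last first.
    by apply: h2; rewrite inE /=.
  rewrite eza in h1 *; have h3 := h1 (mem_head _ _).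
  have N0 : (0 : int) < N.+1 by rewrite ltz_nat.
  split.
    move=> n n0; have := h3 n (lt_trans n0 N0).
    by rewrite /lsub x0_neg // subr0.
  have := h3 0 N0; rewrite /lsub /x0 eqxx /= => /eqP.
  by rewrite subr_eq0 => /eqP ->; case: ifP; rewrite oner_neq0.
have loc : forall z, Some z \notin S -> forall m, exists k,
    'X^m %| (q0 \Po ('X + z%:P)) * \poly_(i < m + k) y (Some z) i%:Z - (p0 \Po ('X + z%:P)).
  move=> z zS m; have [_ [p1 [q1 [q1n0 [e conv]]]]] := Hexp _ zS.
  exists (size (q1 \Po ('X + z%:P))); apply: key;
    [ by rewrite comp_poly2_eq0 ?size_XaddC
    | by rewrite -comp_polyM (rel p1 q1 q1n0 e) comp_polyM
    | exact: (ord0 z zS).1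
    | exact: conv ].
have c0 : forall z, Some z \notin S -> q0.[z] * y (Some z) 0 = p0.[z].
  move=> z zS; have [k hk] := loc z zS 1%N.
  move: hk => /dvdXnP/(_ 0%N isT).
  rewrite coefB coef0M coef_poly /= -!horner_coef0 !horner_comp !hornerE.
  by move/eqP; rewrite subr_eq0 => /eqP.
have rootS : forall z, root p0 z || root q0 z -> ('X - z%:P) %| Dp S.
  move=> z hz; case: (boolP (Some z \in S)) => [zS|zS]; first exact: Dp_dvd.
  have [o1 o2] := ord0 z zS; have e := c0 z zS.
  have rp : root p0 z.
    case/orP: hz => // rq; by rewrite /root -e (eqP rq) mul0r.
  have := coprimep_root cop rp.
  by rewrite -[q0.[z]](mulfK o2) e (eqP rp) mul0r eqxx.
have [u eu] : exists u, Dp S * p0^`() = u * p0.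
  by apply/dvdpP; apply: divD p0n0 _ => z rz; apply: rootS; rewrite rz.
have [v ev] : exists v, Dp S * q0^`() = v * q0.
  by apply/dvdpP; apply: divD q0n0 _ => z rz; apply: rootS; rewrite rz orbT.
have su := size_quot p0n0 eu; have sv := size_quot q0n0 ev.
have sD := size_Dp S.
set h := 'X + a%:P.
have dh : forall p, (p \Po h)^`() = p^`() \Po h.
  by move=> p; rewrite deriv_comp /h derivD derivX derivC addr0 mulr1.
have E : Dp S * (p0^`() * q0 - p0 * q0^`()) = p0 * q0 * (u - v).
  rewrite mulrBr mulrA eu [Dp S * (p0 * _)]mulrCA ev; ring.
apply: (@final _ (Dp S \Po h) (p0 \Po h) (q0 \Po h) ((u - v) \Po h) N).
- by rewrite comp_poly2_eq0 ?size_XaddC ?Dp_neq0.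
- by rewrite !dh -!comp_polyM -comp_polyB -comp_polyM E !comp_polyM.
- rewrite size_comp_poly2 ?size_XaddC //.
  apply: leq_ltn_trans (size_polyD _ _) _; rewrite size_polyN gtn_max.
  have hD : ((size (Dp S)).-1 < N)%N.
    by move: sD; rewrite /N; case: (size (Dp S)) => //= k; rewrite !ltnS => h1; exact: leqW h1.
  by rewrite !(leq_ltn_trans _ hD).
- rewrite -horner_coef0 horner_comp /h !hornerE.
  apply/negP => /eqP qa0.
  have rp : root p0 a by rewrite /root -(c0 a aS) qa0 mul0r.
  by move: (coprimep_root cop rp); rewrite qa0 eqxx.
- have [k hk] := loc a aS N.+1.
  set LM := \poly_(i < N.+1 + k) y (Some a) i%:Z in hk.
  have hT : 'X^(N.+1) %| LM - (1 + 'X^N).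
    apply/dvdXnP => i iN; have [h1 _] := Hy _ aS.
    have := h1 (mem_head _ _) i; rewrite ltz_nat => /(_ iN).
    rewrite /lsub /x0 eqxx /= => /eqP; rewrite subr_eq0 => /eqP ya.
    rewrite /LM coefB coef_poly (leq_trans iN (leq_addr _ _)) ya coefD coef1 coefXn eqz_nat.
    have [->|i0] := eqVneq i 0%N.
      by rewrite /= /N; rewrite addr0 subrr.
    have iz : (i%:Z == 0) = false by apply/negbTE; rewrite -[0]/(0%N%:Z) eqz_nat.
    rewrite iz /= add0r.
    by case: (i == N); rewrite subrr.
  have -> : (q0 \Po h) * (1 + 'X^N) - (p0 \Po h) =
    ((q0 \Po h) * LM - (p0 \Po h)) - (q0 \Po h) * (LM - (1 + 'X^N)) by ring.
  by apply: dvdp_sub hk (dvdp_mull _ hT).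
- by [].
Qed.

Theorem proposition4p1' (S : seq (place R)) : ~ strong_approx_Gm S.
Proof.
move=> H; have [a aS] := exists_out S.
have := H _ (@U_open S a (size S).+2 ((size S).+3)%:Z).
case.
  by exists (x0 a (size S).+2); split; [exact: x0_idele | exact: U_x0].
move=> f [fn0 [y [Uy Hexp]]].
exact: (core aS fn0 Uy Hexp).
Qed.
End M.


Close Scope ring_scope.
Theorem proposition4p1 (R : realType) (S : seq (place R)) :
  ~ strong_approx_Gm S.
Proof. exact: (@proposition4p1' R S). Qed.
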